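(* Suppose UBEV-S (described in the context) is run on a contextual-bandit MDP $\mathcal M_C$, i.e. an episodic MDP whose transition probabilities satisfy $p(s'\mid s,a)=\mu(s')$ for all $s,a,s'$, for a fixed distribution $\mu$ over states. Then outside of the failure event, for every episode $k$ and timestep $t$, $$\mathrm{rng}\,\tilde V^{\pi_k}_t\le 1+\tilde O\!\left(\frac{H\sqrt S}{\sqrt{\min_{(s',t')}n_k(s',\pi_k(s',t'))}}\right).$$
   Context: Setting: a finite-horizon episodic MDP with finite state set $\mathcal S$ ($|\mathcal S|=S$), finite action set $\mathcal A$ ($|\mathcal A|=A$), horizon $H$, stationary transitions $p(s'\mid s,a)$ and mean rewards $r(s,a)\in[0,1]$ (observed rewards in $[0,1]$). Episodes $k=1,2,\dots$ each have $H$ steps. For a vector $V$, $\mathrm{rng}\,V=\max_sV(s)-\min_sV(s)$. $V^*_t$ denotes the optimal value function at timestep $t$. $\tilde O(\cdot)$ hides constants and factors polylogarithmic in quantities polynomial in $S,A,T,K,H,1/\delta$. Algorithm UBEV-S (input $\delta$): maintain, aggregated over all timesteps of all past episodes, counts $n(s,a)$, reward sums $l(s,a)$, transition counts $m(s',s,a)$ (initially $0$), and a scalar $\phi^+$ initialized to $0$ once. At the start of each episode, set $\tilde V_{H+1}\equiv0$ and for $t=H,\dots,1$ and each $s$: for each $a$, $\phi(s,a)=\sqrt{(2\ln\ln(\max\{e,n(s,a)\})+\ln(27HSA/\delta))/n(s,a)}$, $\hat r(s,a)=l(s,a)/n(s,a)$, $\hat p(s,a)=m(\cdot,s,a)/n(s,a)$,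 $Q(a)=\min\{1,\hat r+\phi\}+\min\{\max_{s'}\tilde V_{t+1}(s'),\hat p(s,a)^\top\tilde V_{t+1}+\min\{H-t,\mathrm{rng}\,\tilde V_{t+1}+\phi^+\}\phi(s,a)\}$; set $\pi_k(s,t)=\arg\max_aQ(a)$, $\tilde V_t(s)=Q(\pi_k(s,t))$, $\phi^+\leftarrow\max\{4\sqrt SH^2\phi(s,\pi_k(s,t)),\phi^+\}$. Then execute $\pi_k$ for $H$ steps and update the counts. In episode $k$: $n_k(s,a)$, $\hat r_k$, $\hat p_k$, $\phi_k$ are the quantities at the start of the episode and $\tilde V^{\pi_k}_t$ is the vector $\tilde V_t$ computed in episode $k$. Failure event: let $w_{tk}(s,a)$ be the probability, in episode $k$ under $\pi_k$, of being in $s$ at step $t$ and taking $a$. ''Outside of the failure event'' means that for all episodes $k$, timesteps $t$ and pairs $(s,a)$ the concentration inequalities used by the algorithm hold, in particular: $n_k(s,a)\ge\frac12\sum_{i<k}\sum_{t\in[H]}w_{ti}(s,a)-H\ln\frac{9SA}{\delta}$; $|\hat r_k(s,a)-r(s,a)|\le\phi_k(s,a)$; $|(\hat p_k(s,a)-p(\cdot\mid s,a))^\top V^*_{t+1}|\le(\mathrm{rng}\,V^*_{t+1})\phi_k(s,a)$; and $\|\hat p_k(s,a)-p(\cdot\mid s,a)\|_1\le4\sqrt S\,\phi_k(s,a)$ (so in particular $\|\hat p_k(s,a)-p(\cdot\mid s,a)\|_1=\tilde O(\sqrt{S/n_k(s,a)})$). *)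

(* Defs.v *)
From HB Require Import structures.
From mathcomp Require Import all_boot all_order all_algebra.
From mathcomp Require Import reals sequences exp.
Unset Printing Implicit Defensive.
Import Order.TTheory GRing.Theory Num.Theory.
Local Open Scope ring_scope.

(* States are 'I_S (processed in the natural order 0,...,S-1 during planning),
   actions are 'I_A, timesteps are natural numbers 1..H, episodes are 1,2,... *)

Definition vmax {R : realType} {T : finType} (f : T -> R) : R :=
  let l := [seq f x | x <- enum T] in foldr Num.max (head 0 l) l.
Definition vmin {R : realType} {T : finType} (f : T -> R) : R :=
  let l := [seq f x | x <- enum T] in foldr Num.min (head 0 l) l.
Definition rng {R : realType} {T : finType} (f : T -> R) : R := vmax f - vmin f.

Definition is_distr {R : realType} {T : finType} (f : T -> R) : Prop :=
  (forall x, 0 <= f x) /\ \sum_x f x = 1.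

Definition phi_val {R : realType} (S A H : nat) (delta : R) (n : nat) : R :=
  Num.sqrt ((2 * ln (ln (Num.max (expR 1) n%:R))
             + ln (27 * H%:R * S%:R * A%:R / delta)) / n%:R).

(* phi as an extended value: None stands for +infinity (the case n = 0) *)
Definition phi_of {R : realType} (S A H : nat) (delta : R) (n : nat) : option R :=
  if n == 0%N then None else Some (phi_val S A H delta n).

Definition phip_upd {R : realType} (S H : nat) (pp ph : option R) : option R :=
  match pp, ph with
  | Some p, Some x => Some (Num.max (4 * Num.sqrt S%:R * H%:R ^+ 2 * x) p)
  | _, _ => None
  end.

(* Q(a) at state s, timestep t, given counts n, reward sums l, transition
   counts m (m s' s a = m(s',s,a)), the next vector Vn = V~_{t+1} and the
   current value pp of phi+.  If n(s,a) = 0 then phi = +infinity and the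
   formula evaluates to 1 + max_s' V~_{t+1}(s'). *)
Definition Qval {R : realType} (S A H : nat) (delta : R)
  (n : 'I_S -> 'I_A -> nat) (l : 'I_S -> 'I_A -> R)
  (m : 'I_S -> 'I_S -> 'I_A -> nat) (Vn : 'I_S -> R) (t : nat)
  (pp : option R) (s : 'I_S) (a : 'I_A) : R :=
  match phi_of S A H delta (n s a) with
  | None => 1 + vmax Vn
  | Some ph =>
      let nn : R := (n s a)%:R in
      let coef := match pp with
                  | None => (H - t)%:R
                  | Some p => Num.min (H - t)%:R (rng Vn + p)
                  end in
      Num.min 1 (l s a / nn + ph)
      + Num.min (vmax Vn) (\sum_(s' : 'I_S) ((m s' s a)%:R / nn) * Vn s' + coef * ph)
  end.

(* Counts aggregated over all timesteps 1..H of episodes 1..k-1.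
   st i h = state at step h of episode i (h = 1..H+1, state H+1 is the last
   observed next state), rw i h = observed reward, action = pol i (st i h) h. *)
Definition cnt_n {S A : nat} (H : nat) (pol : nat -> 'I_S -> nat -> 'I_A)
  (st : nat -> nat -> 'I_S) (k : nat) (s : 'I_S) (a : 'I_A) : nat :=
  \sum_(1 <= i < k) \sum_(1 <= h < H.+1)
     ((st i h == s) && (pol i (st i h) h == a) : nat).

Definition cnt_l {R : realType} {S A : nat} (H : nat)
  (pol : nat -> 'I_S -> nat -> 'I_A) (st : nat -> nat -> 'I_S)
  (rw : nat -> nat -> R) (k : nat) (s : 'I_S) (a : 'I_A) : R :=
  \sum_(1 <= i < k) \sum_(1 <= h < H.+1)
     (if (st i h == s) && (pol i (st i h) h == a) then rw i h else 0).

Definition cnt_m {S A : nat} (H : nat) (pol : nat -> 'I_S -> nat -> 'I_A)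
  (st : nat -> nat -> 'I_S) (k : nat) (s' s : 'I_S) (a : 'I_A) : nat :=
  \sum_(1 <= i < k) \sum_(1 <= h < H.+1)
     ([&& st i h == s, pol i (st i h) h == a & st i h.+1 == s'] : nat).

Definition rhat {R : realType} {S A : nat} (H : nat) pol st (rw : nat -> nat -> R)
  k (s : 'I_S) (a : 'I_A) : R :=
  cnt_l H pol st rw k s a / (cnt_n H pol st k s a)%:R.
Definition phat {R : realType} {S A : nat} (H : nat) pol st
  k (s : 'I_S) (a : 'I_A) (s' : 'I_S) : R :=
  (cnt_m H pol st k s' s a)%:R / (cnt_n (A := A) H pol st k s a)%:R.

(* optimal value function: Wstar j = V*_{H+1-j}; V*_{H+1} = 0 *)
Fixpoint Wstar {R : realType} {S A : nat} (r : 'I_S -> 'I_A -> R)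
  (p : 'I_S -> 'I_A -> 'I_S -> R) (j : nat) : 'I_S -> R :=
  match j with
  | 0%N => fun _ => 0
  | j'.+1 => fun s => vmax (fun a : 'I_A =>
                r s a + \sum_(s' : 'I_S) p s a s' * Wstar r p j' s')
  end.
Definition Vstar {R : realType} {S A : nat} (H : nat) (r : 'I_S -> 'I_A -> R)
  (p : 'I_S -> 'I_A -> 'I_S -> R) (t : nat) : 'I_S -> R :=
  Wstar r p (H.+1 - t).

(* state occupancy: occ j s = P(s_{j+1} = s) under policy pol_i, initial
   distribution p0 *)
Fixpoint occ {R : realType} {S A : nat} (p0 : 'I_S -> R)
  (p : 'I_S -> 'I_A -> 'I_S -> R) (pol_i : 'I_S -> nat -> 'I_A) (j : nat)
  : 'I_S -> R :=
  match j with
  | 0%N => p0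
  | j'.+1 => fun s' => \sum_(s : 'I_S) occ p0 p pol_i j' s * p s (pol_i s j'.+1) s'
  end.
Definition wocc {R : realType} {S A : nat} (p0 : 'I_S -> R)
  (p : 'I_S -> 'I_A -> 'I_S -> R) (pol : nat -> 'I_S -> nat -> 'I_A)
  (i h : nat) (s : 'I_S) (a : 'I_A) : R :=
  occ p0 p (pol i) h.-1 s * (pol i s h == a)%:R.

(* A run of UBEV-S (with any argmax tie-breaking):
   pol k s t = pi_k(s,t), Vt k t = V~_t computed in episode k,
   phip k t s = value of phi+ just before state s at timestep t is processed
   in episode k (None = +infinity). *)
Definition ubevs_run {R : realType} (S A H : nat) (delta : R)
  (pol : nat -> 'I_S -> nat -> 'I_A) (Vt : nat -> nat -> 'I_S -> R)
  (phip : nat -> nat -> 'I_S -> option R)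
  (st : nat -> nat -> 'I_S) (rw : nat -> nat -> R) : Prop :=
  let upd k t s := phip_upd S H (phip k t s)
                     (phi_of S A H delta (cnt_n H pol st k s (pol k s t))) in
  (forall i h, 0 <= rw i h <= 1) /\
  (forall s0 : 'I_S, val s0 = 0%N -> phip 1%N H s0 = Some 0) /\
  (forall k (s : 'I_S), (0 < k)%N -> Vt k H.+1 s = 0) /\
  (forall k t (s : 'I_S), (0 < k)%N -> (0 < t <= H)%N ->
     let Q := Qval S A H delta (cnt_n H pol st k) (cnt_l H pol st rw k)
                (cnt_m H pol st k) (Vt k t.+1) t (phip k t s) s in
     (forall a, Q a <= Q (pol k s t)) /\ Vt k t s = Q (pol k s t)) /\
  (forall k t (s s' : 'I_S), (0 < k)%N -> (0 < t <= H)%N ->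
     val s' = (val s).+1 -> phip k t s' = upd k t s) /\
  (* evolution of phi+ : from the last state of timestep t to timestep t-1 *)
  (forall k t (s s0 : 'I_S), (0 < k)%N -> (1 < t <= H)%N ->
     val s = S.-1 -> val s0 = 0%N -> phip k t.-1 s0 = upd k t s) /\
  (* evolution of phi+ : carried over to the next episode *)
  (forall k (s s0 : 'I_S), (0 < k)%N ->
     val s = S.-1 -> val s0 = 0%N -> phip k.+1 H s0 = upd k 1%N s).

(* "outside of the failure event": the concentration inequalities hold for
   all episodes k, timesteps t and pairs (s,a) *)
Definition no_failure {R : realType} (S A H : nat) (delta : R)
  (p0 : 'I_S -> R) (r : 'I_S -> 'I_A -> R) (p : 'I_S -> 'I_A -> 'I_S -> R)
  (pol : nat -> 'I_S -> nat -> 'I_A) (st : nat -> nat -> 'I_S)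
  (rw : nat -> nat -> R) : Prop :=
  forall k t (s : 'I_S) (a : 'I_A), (0 < k)%N -> (0 < t <= H)%N ->
    let n := cnt_n H pol st k s a in
    (1 / 2 * (\sum_(1 <= i < k) \sum_(1 <= h < H.+1) wocc p0 p pol i h s a)
       - H%:R * ln (9 * S%:R * A%:R / delta) <= n%:R) /\
    ((0 < n)%N ->
       let ph := phi_val S A H delta n in
       `|rhat H pol st rw k s a - r s a| <= ph /\
       `|\sum_(s' : 'I_S) (phat H pol st k s a s' - p s a s')
                           * Vstar H r p t.+1 s'|
          <= rng (Vstar H r p t.+1) * ph /\
       \sum_(s' : 'I_S) `|phat H pol st k s a s' - p s a s'|
          <= 4 * Num.sqrt S%:R * ph).

Definition nmin {S A : nat} (H : nat) (pol : nat -> 'I_S -> nat -> 'I_A)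
  (st : nat -> nat -> 'I_S) (k : nat) : nat :=
  let l := [seq cnt_n H pol st k s (pol k s t) | s <- enum 'I_S, t <- iota 1 H] in
  foldr minn (head 0%N l) l.

(* Main.v *)
Require Import Defs.
From HB Require Import structures.
From mathcomp Require Import all_boot all_order all_algebra.
From mathcomp Require Import reals sequences exp.
From mathcomp Require Import ring lra.
Import Order.TTheory GRing.Theory Num.Theory.
Local Open Scope ring_scope.


Lemma foldr_max_prop (R : realType) (l : seq R) x0 :
  x0 <= foldr Num.max x0 l /\ (forall x, x \in l -> x <= foldr Num.max x0 l)
  /\ (foldr Num.max x0 l = x0 \/ foldr Num.max x0 l \in l).
Proof.
elim: l => [|y l [IH1 [IH2 IH3]]] /=; first by split=> //; split=> //; left.
split; first by rewrite le_max IH1 orbT.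
split.
  move=> x; rewrite inE => /orP [/eqP -> | xl]; first by rewrite le_max lexx.
  by rewrite le_max IH2 ?orbT.
rewrite maxEle; case: ifP => _.
  case: IH3 => [->|H]; first by left.
  by right; rewrite inE H orbT.
by right; rewrite inE eqxx.
Qed.

Lemma foldr_min_prop (R : realType) (l : seq R) x0 :
  foldr Num.min x0 l <= x0 /\ (forall x, x \in l -> foldr Num.min x0 l <= x)
  /\ (foldr Num.min x0 l = x0 \/ foldr Num.min x0 l \in l).
Proof.
elim: l => [|y l [IH1 [IH2 IH3]]] /=; first by split=> //; split=> //; left.
split; first by rewrite ge_min IH1 orbT.
split.
  move=> x; rewrite inE => /orP [/eqP -> | xl]; first by rewrite ge_min lexx.
  by rewrite ge_min IH2 ?orbT.
rewrite minEle; case: ifP => _.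
  by right; rewrite inE eqxx.
case: IH3 => [->|H]; first by left.
by right; rewrite inE H orbT.
Qed.

Lemma vmax_ge (R : realType) (T : finType) (f : T -> R) x : f x <= vmax f.
Proof.
rewrite /vmax; have [_ [H _]] := foldr_max_prop _ [seq f x | x <- enum T] (head 0 [seq f x | x <- enum T]).
by apply: H; apply: map_f; rewrite mem_enum.
Qed.

Lemma vmin_le (R : realType) (T : finType) (f : T -> R) x : vmin f <= f x.
Proof.
rewrite /vmin; have [_ [H _]] := foldr_min_prop _ [seq f x | x <- enum T] (head 0 [seq f x | x <- enum T]).
by apply: H; apply: map_f; rewrite mem_enum.
Qed.

Lemma vmax_att (R : realType) (T : finType) (f : T -> R) (x0 : T) : exists x, vmax f = f x.
Proof.
rewrite /vmax; set l := [seq f x | x <- enum T].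
have hl : head 0 l \in l.
  rewrite /l; case E: (enum T) => [|y e] /=; last by rewrite inE eqxx.
  by have := mem_enum T x0; rewrite E.
have [_ [_ H]] := foldr_max_prop _ l (head 0 l).
have : foldr Num.max (head 0 l) l \in l by case: H => [->|].
by move/mapP => [x _ ->]; exists x.
Qed.

Lemma vmin_att (R : realType) (T : finType) (f : T -> R) (x0 : T) : exists x, vmin f = f x.
Proof.
rewrite /vmin; set l := [seq f x | x <- enum T].
have hl : head 0 l \in l.
  rewrite /l; case E: (enum T) => [|y e] /=; last by rewrite inE eqxx.
  by have := mem_enum T x0; rewrite E.
have [_ [_ H]] := foldr_min_prop _ l (head 0 l).
have : foldr Num.min (head 0 l) l \in l by case: H => [->|].
by move/mapP => [x _ ->]; exists x.
Qed.

Lemma rng_ge0 (R : realType) (T : finType) (f : T -> R) (x0 : T) : 0 <= rng f.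
Proof. rewrite /rng subr_ge0; exact: (le_trans (vmin_le _ _ f x0) (vmax_ge _ _ f x0)). Qed.

Lemma rng_le (R : realType) (T : finType) (f : T -> R) (x0 : T) B :
  (forall x y, f x - f y <= B) -> rng f <= B.
Proof.
move=> H; rewrite /rng; have [x1 ->] := vmax_att _ _ f x0; have [x2 ->] := vmin_att _ _ f x0; exact: H.
Qed.


Definition pnn {R : realType} (o : option R) : Prop :=
  match o with Some p => 0 <= p | None => True end.

Lemma upd_pnn (R : realType) S H (pp ph : option R) :
  pnn pp -> pnn (phip_upd S H pp ph).
Proof.
case: pp => [p|] //=; case: ph => [x|] //= hp.
by rewrite le_max hp orbT.
Qed.

Lemma phip_nonneg (R : realType) (S A H : nat) (delta : R) pol Vt
  (phip : nat -> nat -> 'I_S -> option R) st rw :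
  (0 < S)%N -> (0 < H)%N -> ubevs_run S A H delta pol Vt phip st rw ->
  forall k t s, (0 < k)%N -> (0 < t <= H)%N -> pnn (phip k t s).
Proof.
move=> S0 H0' [_ [Hinit [_ [_ [Hs [Ht Hk]]]]]].
have ha : forall k t, (0 < k)%N -> (0 < t <= H)%N ->
    (forall s : 'I_S, val s = 0%N -> pnn (phip k t s)) -> forall s, pnn (phip k t s).
  move=> k t k0 tH H0 [n hn]; elim: n hn => [|n IH] hn; first exact: H0.
  have hn' : (n < S)%N by apply: ltnW.
  rewrite (Hs k t (Ordinal hn') (Ordinal hn) k0 tH erefl).
  exact/upd_pnn/IH.
have hSl : (S.-1 < S)%N by rewrite prednK.
have hb : forall k, (0 < k)%N -> (forall s : 'I_S, val s = 0%N -> pnn (phip k H s)) ->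
    forall j, (j < H)%N -> forall s : 'I_S, val s = 0%N -> pnn (phip k (H - j)%N s).
  move=> k k0 H0; elim => [|j IH] jH s s0; first by rewrite subn0; exact: H0.
  have e : (H - j.+1 = (H - j).-1)%N by rewrite subnS.
  rewrite e (Ht k (H - j)%N (Ordinal hSl) s k0 _ erefl s0); last first.
    by apply/andP; split; [rewrite ltn_subRL addn1 | rewrite leq_subr].
  apply/upd_pnn/ha => //; last by apply: IH => //; apply: ltnW.
  by apply/andP; split; [rewrite subn_gt0; apply: ltnW | rewrite leq_subr].
have hc : forall k (s : 'I_S), val s = 0%N -> pnn (phip k.+1 H s).
  elim => [|k IH] s s0.
    by rewrite (Hinit s s0) /=.
  rewrite (Hk k.+1 (Ordinal hSl) s erefl erefl s0).
  apply/upd_pnn/ha => //.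
  move=> s1 s10; have := hb k.+1 erefl IH H.-1 _ s1 s10.
  by rewrite -subn1 subKn //; apply; rewrite subn1 prednK.
move=> [|k] t s // _ tH.
apply: ha => //.
have -> : t = (H - (H - t))%N by rewrite subKn //; case/andP: tH.
move=> s1 s10; apply: hb => //; first exact: hc.
by case/andP: tH => t0 tH; rewrite ltn_subrL t0 H0'.
Qed.

Lemma vmax_bounds {R : realType} (S : nat) (V : 'I_S -> R) M :
  (0 < S)%N -> (forall s, 0 <= V s <= M) -> 0 <= vmax V <= M.
Proof.
move=> S0 HV; have [x ->] := vmax_att _ _ V (Ordinal S0); exact: HV.
Qed.

Lemma phi_val_ge0 {R : realType} S A H (delta : R) n : 0 <= phi_val S A H delta n.
Proof. exact: sqrtr_ge0. Qed.

Lemma Q_bounds {R : realType} S A H (delta : R) n l m (Vn : 'I_S -> R) t pp s a M :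
  (0 < S)%N -> (forall s', 0 <= Vn s' <= M) -> pnn pp -> (forall s a, 0 <= l s a) ->
  0 <= Qval S A H delta n l m Vn t pp s a <= 1 + M.
Proof.
move=> S0 HV hp hl; have /andP[v0 vM] := vmax_bounds _ _ _ S0 HV.
rewrite /Qval /phi_of; case: eqP => [_|hn].
  by apply/andP; split; lra.
have ph0 := phi_val_ge0 S A H delta (n s a).
set ph := phi_val S A H delta (n s a).
have nn0 : 0 < (n s a)%:R :> R by rewrite ltr0n lt0n; apply/eqP.
set nn := (n s a)%:R.
have c0 : 0 <= match pp with | Some p => Num.min (H - t)%:R (rng Vn + p) | None => (H - t)%:R end.
  case: pp hp => [p|] //= hp; rewrite le_min ler0n /=.
  have := rng_ge0 _ _ Vn (Ordinal S0); lra.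
set c := match pp with | Some p => _ | None => _ end.
have h1 : 0 <= Num.min 1 (l s a / nn + ph) <= 1.
  rewrite le_min ge_min lexx /= ler01 /= andbT; apply: addr_ge0 => //.
  by apply: divr_ge0 => //; apply: ltW.
have h2 : 0 <= Num.min (vmax Vn) (\sum_(s' : 'I_S) (m s' s a)%:R / nn * Vn s' + c * ph) <= M.
  rewrite le_min ge_min vM v0 /= andbT.
  apply: addr_ge0; last exact: mulr_ge0.
  apply: sumr_ge0 => s' _; apply: mulr_ge0; last by case/andP: (HV s').
  by apply: divr_ge0 => //; apply: ltW.
lra.
Qed.

Lemma cnt_l_ge0 {R : realType} {S A : nat} H pol st (rw : nat -> nat -> R) k
  (s : 'I_S) (a : 'I_A) : (forall i h, 0 <= rw i h <= 1) -> 0 <= cnt_l H pol st rw k s a.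
Proof.
move=> hr; apply: sumr_ge0 => i _; apply: sumr_ge0 => h _.
by case: ifP => // _; case/andP: (hr i h).
Qed.

Lemma V_bounds {R : realType} (S A H : nat) (delta : R) pol Vt phip st rw :
  (0 < S)%N -> (0 < H)%N -> ubevs_run S A H delta pol Vt phip st rw ->
  forall k, (0 < k)%N -> forall j, (j <= H)%N -> forall s,
    0 <= Vt k (H.+1 - j)%N s <= j%:R.
Proof.
move=> S0 H0 run; have hp := phip_nonneg _ _ _ _ _ _ _ _ _ _ S0 H0 run.
case: run => [Hrw [Hinit [HV0 [Hgr _]]]] k k0.
elim => [|j IH] jH s; first by rewrite subn0 HV0 // lexx.
have tH : (0 < H - j <= H)%N by rewrite subn_gt0 jH leq_subr.
have e : (H.+1 - j.+1 = H - j)%N by rewrite subSS.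
rewrite e; have [_ ->] := Hgr k (H - j)%N s k0 tH.
have e2 : (H - j).+1 = (H.+1 - j)%N by rewrite subSn // ltnW.
rewrite e2 -natr1 addrC; apply: Q_bounds => //.
- by move=> s'; apply: IH; apply: ltnW.
- exact: hp.
- by move=> s1 a1; apply: cnt_l_ge0.
Qed.

Lemma phi_bound {R : realType} (S A H k nm n : nat) (delta : R) :
  (0 < S)%N -> (0 < A)%N -> (0 < H)%N -> (0 < k)%N -> 0 < delta -> delta <= 1 ->
  (0 < nm)%N -> (nm <= n)%N -> (n <= k * H)%N ->
  phi_val S A H delta n <=
    3 * ln (expR 1 + (S * A * H * k)%:R / delta) / Num.sqrt nm%:R.
Proof.
move=> S0 A0 H0 k0 d0 d1 nm0 nmn nkH.
set E := expR 1; set y := (S * A * H * k)%:R / delta; set X := ln (E + y).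
have E2 : 2 <= E by have := expR_ge1Dx (1 : R); rewrite /E; lra.
have N1 : 1 <= (S * A * H * k)%:R :> R.
  by rewrite ler1n !muln_gt0 S0 A0 H0 k0.
have Ny : (S * A * H * k)%:R <= y.
  rewrite /y ler_pdivlMr //; apply: ler_piMr => //; lra.
have y1 : 1 <= y by lra.
have X1 : 1 <= X.
  rewrite /X -[1](expRK 1) -/E ler_ln ?posrE; lra.
have ny : n%:R <= y.
  apply: le_trans Ny; rewrite ler_nat; apply: leq_trans nkH _.
  by rewrite [(k * H)%N]mulnC -mulnA leq_pmull // muln_gt0 S0 A0.
set z := Num.max E n%:R.
have zE : E <= z by rewrite le_max lexx.
have zy : z <= E + y by rewrite ge_max; apply/andP; split; lra.
have lz : ln z <= X by rewrite /X ler_ln ?posrE; lra.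
have lz1 : 1 <= ln z by rewrite -[1](expRK 1) -/E ler_ln ?posrE; lra.
have T1 : ln (ln z) <= X.
  have h : ln (ln z) < ln z by apply: ln_sublinear; lra.
  lra.
have u3 : 3 <= E + y by lra.
have u4 : 27 * y <= (E + y) ^+ 4.
  have h2 : 9 <= (E + y) ^+ 2 by rewrite expr2; nra.
  have h3 : 27 <= (E + y) ^+ 3 by rewrite exprS; nra.
  rewrite exprS; nra.
have T2 : ln (27 * H%:R * S%:R * A%:R / delta) <= 4 * X.
  have pos : 0 < 27 * H%:R * S%:R * A%:R / delta.
    by apply: divr_gt0 => //; rewrite !mulr_gt0 // ltr0n.
  apply: (@le_trans _ _ (ln ((E + y) ^+ 4))); last first.
    by rewrite lnXn; [rewrite -/X; lra | lra].
  rewrite ler_ln ?posrE //; last by apply: exprn_gt0; lra.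
  apply: le_trans u4; rewrite /y mulrA ler_pM2r ?invr_gt0 //.
  rewrite -!mulrA ler_pM2l // !natrM.
  by rewrite -!natrM ler_nat mulnC leq_pmulr.
rewrite /phi_val -/E -/z.
set num := 2 * ln (ln z) + _.
have hnum : num <= (3 * X) ^+ 2 by rewrite /num expr2; nra.
have n0 : 0 < n%:R :> R by rewrite ltr0n; apply: leq_trans nmn.
have m0 : 0 < nm%:R :> R by rewrite ltr0n.
have h : num / n%:R <= (3 * X) ^+ 2 / nm%:R.
  apply: (@le_trans _ _ ((3 * X) ^+ 2 / n%:R)).
    by rewrite ler_pM2r // invr_gt0.
  rewrite ler_pM2l; last by rewrite exprn_gt0 //; lra.
  by rewrite lef_pV2 ?posrE // ler_nat.
apply: le_trans (ler_wsqrtr h) _.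
rewrite sqrtrM; last by apply: sqr_ge0.
rewrite sqrtr_sqr sqrtrV; last by apply: ltW.
rewrite ger0_norm //; lra.
Qed.

Lemma foldr_minn_le (l : seq nat) x0 x : x \in l -> (foldr minn x0 l <= x)%N.
Proof.
elim: l => [|y l IH] //=; rewrite inE => /orP [/eqP ->|xl].
  by rewrite geq_min leqnn.
by rewrite geq_min IH ?orbT.
Qed.

Lemma nmin_le {S A : nat} H (pol : nat -> 'I_S -> nat -> 'I_A) st k (s : 'I_S) t :
  (0 < t <= H)%N -> (nmin H pol st k <= cnt_n H pol st k s (pol k s t))%N.
Proof.
move=> tH; rewrite /nmin; apply: foldr_minn_le.
apply: (allpairs_f (fun s t => cnt_n H pol st k s (pol k s t))).
  by rewrite mem_enum.
by rewrite mem_iota add1n ltnS.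
Qed.

Lemma cnt_n_le {S A : nat} H (pol : nat -> 'I_S -> nat -> 'I_A) st k s a :
  (cnt_n H pol st k s a <= k * H)%N.
Proof.
rewrite /cnt_n; apply: (@leq_trans (\sum_(1 <= i < k) \sum_(1 <= h < H.+1) 1)%N).
  by apply: leq_sum => i _; apply: leq_sum => h _; case: (_ && _).
rewrite !sum_nat_const_nat muln1 subSS subn0.
by apply: leq_mul => //; apply: leq_subr.
Qed.

Lemma alg_step {R : realType} (a1 a2 M x1 x2 D : R) :
  0 <= a2 -> 0 <= D -> x1 - x2 <= D ->
  (Num.min 1 a1 + Num.min M x1) - (Num.min 1 a2 + Num.min M x2) <= 1 + D.
Proof.
move=> a20 D0 hx.
have h1 : Num.min 1 a1 <= 1 by rewrite ge_min lexx.
have h2 : 0 <= Num.min 1 a2 by rewrite le_min ler01.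
have h3 : Num.min M x1 <= M by rewrite ge_min lexx.
have h4 : Num.min M x1 <= x1 by rewrite ge_min lexx orbT.
rewrite [Num.min M x2]minEle; case: ifP => _; lra.
Qed.

Lemma sum_dev_le {R : realType} {S : nat} (q mu V : 'I_S -> R) M :
  (forall s, 0 <= V s <= M) ->
  `|\sum_s (q s - mu s) * V s| <= (\sum_s `|q s - mu s|) * M.
Proof.
move=> hV; rewrite mulr_suml; apply: le_trans (ler_norm_sum _ _ _) _.
apply: ler_sum => i _; rewrite normrM; apply: ler_wpM2l => //.
by case/andP: (hV i) => h0 h1; rewrite ger0_norm.
Qed.

Lemma coef_bd {R : realType} {S : nat} (pp : option R) H t (V : 'I_S -> R) :
  (0 < S)%N -> pnn pp ->
  0 <= match pp with Some p => Num.min (H - t)%:R (rng V + p) | None => (H - t)%:R end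
    <= H%:R.
Proof.
move=> S0; case: pp => [q|] /= hq.
  rewrite le_min ge_min ler0n ler_nat leq_subr /= andbT.
  have := rng_ge0 _ _ V (Ordinal S0); lra.
by rewrite ler0n ler_nat leq_subr.
Qed.

Lemma step {R : realType} (S A H : nat) (delta : R) (mu p0 : 'I_S -> R)
  (r : 'I_S -> 'I_A -> R) (p : 'I_S -> 'I_A -> 'I_S -> R)
  (pol : nat -> 'I_S -> nat -> 'I_A) (Vt : nat -> nat -> 'I_S -> R)
  (phip : nat -> nat -> 'I_S -> option R)
  (st : nat -> nat -> 'I_S) (rw : nat -> nat -> R) k t (s1 s2 : 'I_S) :
  (0 < S)%N -> (0 < H)%N -> (forall s a s', p s a s' = mu s') ->
  ubevs_run S A H delta pol Vt phip st rw ->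
  no_failure S A H delta p0 r p pol st rw ->
  (0 < k)%N -> (0 < t <= H)%N -> (0 < nmin H pol st k)%N ->
  Vt k t s1 - Vt k t s2 <= 1 + H%:R *
    ((4 * Num.sqrt S%:R + 1) * phi_val S A H delta (cnt_n H pol st k s1 (pol k s1 t))
     + 4 * Num.sqrt S%:R * phi_val S A H delta (cnt_n H pol st k s2 (pol k s2 t))).
Proof.
move=> S0 H0 hp run nf k0 tH nm0.
have hpp := phip_nonneg _ _ _ _ _ _ _ _ _ _ S0 H0 run k t _ k0 tH.
have hV0 := V_bounds _ _ _ _ _ _ _ _ _ S0 H0 run k k0 (H - t)%N (leq_subr _ _).
have hV : forall s, 0 <= Vt k t.+1 s <= H%:R.
  move=> s; have := hV0 s; case/andP: tH => t0 tH'.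
  rewrite subSn ?leq_subr // subKn // => /andP [-> h] /=.
  by apply: le_trans h _; rewrite ler_nat leq_subr.
have [Hrw [_ [_ [Hgr _]]]] := run.
rewrite (proj2 (Hgr k t s1 k0 tH)) (proj2 (Hgr k t s2 k0 tH)).
have hpp1 := hpp s1; have hpp2 := hpp s2.
have n1pos := leq_trans nm0 (nmin_le H pol st k s1 t tH).
have n2pos := leq_trans nm0 (nmin_le H pol st k s2 t tH).
have [_ nf1] := nf k t s1 (pol k s1 t) k0 tH.
have [_ nf2] := nf k t s2 (pol k s2 t) k0 tH.
have [_ [_ d1]] := nf1 n1pos; have [_ [_ d2]] := nf2 n2pos.
move: n1pos n2pos d1 d2 hpp1 hpp2.
rewrite /Qval /phi_of /phat.
set n1 := cnt_n H pol st k s1 (pol k s1 t).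
set n2 := cnt_n H pol st k s2 (pol k s2 t).
set ph1 := phi_val S A H delta n1.
set ph2 := phi_val S A H delta n2.
set V := Vt k t.+1.
move=> n1pos n2pos d1 d2 hpp1 hpp2.
rewrite lt0n in n1pos; rewrite lt0n in n2pos; rewrite (negbTE n1pos) (negbTE n2pos).
set c1 := (match phip k t s1 with Some _ => _ | None => _ end).
set c2 := (match phip k t s2 with Some _ => _ | None => _ end).
have c1H : 0 <= c1 <= H%:R by apply: coef_bd.
have c2H : 0 <= c2 <= H%:R by apply: coef_bd.
have e1 : \sum_(s' < S) (cnt_m H pol st k s' s1 (pol k s1 t))%:R / n1%:R * V s' =
   \sum_(s' < S) ((cnt_m H pol st k s' s1 (pol k s1 t))%:R / n1%:R - p s1 (pol k s1 t) s') * V s'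
   + \sum_(s' < S) mu s' * V s'.
  by rewrite -big_split; apply: eq_bigr => s' _ /=; rewrite hp mulrBl subrK.
have e2 : \sum_(s' < S) (cnt_m H pol st k s' s2 (pol k s2 t))%:R / n2%:R * V s' =
   \sum_(s' < S) ((cnt_m H pol st k s' s2 (pol k s2 t))%:R / n2%:R - p s2 (pol k s2 t) s') * V s'
   + \sum_(s' < S) mu s' * V s'.
  by rewrite -big_split; apply: eq_bigr => s' _ /=; rewrite hp mulrBl subrK.
have b1 := sum_dev_le (fun s' => (cnt_m H pol st k s' s1 (pol k s1 t))%:R / n1%:R)
             (p s1 (pol k s1 t)) V H%:R hV.
have b2 := sum_dev_le (fun s' => (cnt_m H pol st k s' s2 (pol k s2 t))%:R / n2%:R)
             (p s2 (pol k s2 t)) V H%:R hV.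
simpl in b1, b2.
rewrite e1 e2.
move: b1 b2 d1 d2.
set X1 := \sum_(s' < S) (_ - p s1 _ _) * V s'.
set X2 := \sum_(s' < S) (_ - p s2 _ _) * V s'.
set Y1 := \sum_(s' < S) `|_ - p s1 _ _|.
set Y2 := \sum_(s' < S) `|_ - p s2 _ _|.
move=> b1 b2 d1 d2.
have ph10 := phi_val_ge0 S A H delta n1.
have ph20 := phi_val_ge0 S A H delta n2.
have sq0 := sqrtr_ge0 (S%:R : R).
have H0r : 0 <= H%:R :> R by apply: ler0n.
have f1 : Y1 * H%:R <= 4 * Num.sqrt S%:R * ph1 * H%:R by apply: ler_wpM2r.
have f2 : Y2 * H%:R <= 4 * Num.sqrt S%:R * ph2 * H%:R by apply: ler_wpM2r.
have g1 : c1 * ph1 <= H%:R * ph1 by apply: ler_wpM2r => //; case/andP: c1H.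
have g2 : 0 <= c2 * ph2 by apply: mulr_ge0 => //; case/andP: c2H.
have k1 : X1 <= `|X1| := ler_norm X1.
have k2 : - X2 <= `|X2| by rewrite -normrN ler_norm.
apply: alg_step.
- apply: addr_ge0 => //; apply: divr_ge0; [exact: cnt_l_ge0 | exact: ler0n].
- apply: mulr_ge0 => //; apply: addr_ge0; apply: mulr_ge0 => //; lra.
- lra.
Qed.

Theorem lemma1 :
  exists C c : nat,
  forall (R : realType) (S A H : nat) (delta : R)
    (mu p0 : 'I_S -> R) (r : 'I_S -> 'I_A -> R) (p : 'I_S -> 'I_A -> 'I_S -> R)
    (pol : nat -> 'I_S -> nat -> 'I_A) (Vt : nat -> nat -> 'I_S -> R)
    (phip : nat -> nat -> 'I_S -> option R)
    (st : nat -> nat -> 'I_S) (rw : nat -> nat -> R),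
    (0 < S)%N -> (0 < A)%N -> (0 < H)%N -> 0 < delta -> delta <= 1 ->
    is_distr mu -> is_distr p0 ->
    (forall s a s', p s a s' = mu s') ->
    (forall s a, 0 <= r s a <= 1) ->
    ubevs_run S A H delta pol Vt phip st rw ->
    no_failure S A H delta p0 r p pol st rw ->
    forall k t, (0 < k)%N -> (0 < t <= H)%N ->
    (0 < nmin H pol st k)%N ->
    rng (Vt k t) <=
      1 + C%:R * ln (expR 1 + (S * A * H * k)%:R / delta) ^+ c
            * (H%:R * Num.sqrt S%:R / Num.sqrt (nmin H pol st k)%:R).
Proof.
exists 27%N, 1%N.
move=> R S A H delta mu p0 r p pol Vt phip st rw S0 A0 H0 d0 d1 _ _ hp _ run nf k t k0 tH nm0.
apply: (rng_le _ _ _ (Ordinal S0)) => s1 s2.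
apply: le_trans (step _ _ _ _ _ _ _ _ _ _ _ _ _ k t s1 s2 S0 H0 hp run nf k0 tH nm0) _.
set nm := nmin H pol st k.
set X := ln (expR 1 + (S * A * H * k)%:R / delta).
set B := 3 * X / Num.sqrt nm%:R.
have hb : forall s : 'I_S, phi_val S A H delta (cnt_n H pol st k s (pol k s t)) <= B.
  move=> s; apply: phi_bound => //.
  - exact: nmin_le.
  - exact: cnt_n_le.
have b1 := hb s1; have b2 := hb s2.
have f1 := phi_val_ge0 S A H delta (cnt_n H pol st k s1 (pol k s1 t)).
have f2 := phi_val_ge0 S A H delta (cnt_n H pol st k s2 (pol k s2 t)).
set q1 := phi_val _ _ _ _ (cnt_n _ _ _ _ s1 _) in b1 f1 *.
set q2 := phi_val _ _ _ _ (cnt_n _ _ _ _ s2 _) in b2 f2 *.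
have e : 27%:R * X ^+ 1 * (H%:R * Num.sqrt S%:R / Num.sqrt nm%:R)
           = 9 * H%:R * Num.sqrt S%:R * B by rewrite /B expr1; ring.
rewrite e.
set sq := Num.sqrt S%:R.
have hS1 : (1 : R) <= S%:R by rewrite ler1n.
have sq1 : 1 <= sq by have := ler_wsqrtr hS1; rewrite sqrtr1.
have h0 : 0 <= H%:R :> R by apply: ler0n.
have B0 : 0 <= B by lra.
have i1 : (4 * sq + 1) * q1 <= (4 * sq + 1) * B by apply: ler_wpM2l => //; lra.
have i2 : 4 * sq * q2 <= 4 * sq * B by apply: ler_wpM2l => //; lra.
have i3 : 0 <= (sq - 1) * B by apply: mulr_ge0 => //; lra.
have i4 : H%:R * ((4 * sq + 1) * q1 + 4 * sq * q2) <= H%:R * (9 * sq * B).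
  apply: ler_wpM2l => //; nra.
have -> : 9 * H%:R * sq * B = H%:R * (9 * sq * B) by ring.
lra.
Qed.
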